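(* For every numerical semigroup $\Lambda$, \[ c'(\Lambda) \ge \frac{c(\Lambda)}{e(\Lambda)} - \frac{(m(\Lambda)-1)(e(\Lambda)-2)}{2\,e(\Lambda)}. \]
   Context: A numerical semigroup is a subset $\Lambda \subseteq \mathbb{Z}_{\ge 0}$ that contains $0$, is closed under addition, and has finite complement in $\mathbb{Z}_{\ge 0}$. Every numerical semigroup has a unique minimal (with respect to inclusion) generating set, which is finite; its size is the embedding dimension $e(\Lambda)$. The conductor is $c(\Lambda) = \max(\mathbb{Z}_{\ge 0}\setminus\Lambda) + 1$ (with $c(\Lambda)=0$ if $\Lambda = \mathbb{Z}_{\ge 0}$). Define $c'(\Lambda) = |\{\lambda \in \Lambda : \lambda < c(\Lambda)\}|$. The multiplicity is $m(\Lambda) = \min(\Lambda\setminus\{0\})$. *)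

(* Defs.v *)
From HB Require Import structures.
From mathcomp Require Import all_boot all_order all_algebra.
Set Implicit Arguments. Unset Strict Implicit. Unset Printing Implicit Defensive.

Definition numerical_semigroup (L : pred nat) : Prop :=
  [/\ L 0,
      (forall a b, L a -> L b -> L (a + b)) &
      exists N, forall n, N <= n -> L n].

Inductive in_span (G : seq nat) : nat -> Prop :=
  | span0 : in_span G 0
  | spanS g n : g \in G -> in_span G n -> in_span G (g + n).

Definition generates (G : seq nat) (L : pred nat) : Prop :=
  forall n, L n <-> in_span G n.

Definition minimal_generating_set (G : seq nat) (L : pred nat) : Prop :=
  [/\ uniq G, generates G L &
      forall H : seq nat, {subset H <= G} -> generates H L -> {subset G <= H}].

(* c is the conductor: max(N \ L) + 1, or 0 if L = N *)
Definition is_conductor (L : pred nat) (c : nat) : Prop :=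
  (forall n, c <= n -> L n) /\ (c = 0 \/ ~~ L c.-1).

Definition is_multiplicity (L : pred nat) (m : nat) : Prop :=
  [/\ 0 < m, L m & forall x, 0 < x -> L x -> m <= x].

Definition cprime (L : pred nat) (c : nat) : nat := count L (iota 0 c).

(* Main.v *)
Require Import Defs.
From HB Require Import structures.
From mathcomp Require Import all_boot all_order all_algebra.
From mathcomp Require Import zify ring lra.
Import Order.TTheory GRing.Theory Num.Theory.

Lemma count_sum (T : Type) (a : pred T) (r : seq T) :
  count a r = \sum_(j <- r) (a j : nat).
Proof. by rewrite -sum1_count big_mkcond; apply: eq_bigr => j _; case: (a j). Qed.

Lemma dc_le {P : pred nat} : (forall j, P j.+1 -> P j) ->
  forall i j, i <= j -> P j -> P i.
Proof.
move=> dc i j; elim: j => [|j IH]; first by rewrite leqn0 => /eqP ->.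
rewrite leq_eqVlt => /orP [/eqP -> //|]; rewrite ltnS => Hij Pj.
exact: IH Hij (dc _ Pj).
Qed.

Lemma count_thresh (P : pred nat) K : (forall j, P j.+1 -> P j) ->
  forall j, j < K -> P j = (j < count P (iota 0 K)).
Proof.
move=> dc j jK; apply/idP/idP.
- move=> Pj.
  have -> : K = j.+1 + (K - j.+1) by lia.
  rewrite iotaD count_cat.
  have : all P (iota 0 j.+1).
    apply/allP => i; rewrite mem_iota => /andP [_ Hi].
    by apply: (dc_le dc _ _ _ Pj); lia.
  rewrite all_count => /eqP ->; rewrite size_iota; lia.
- apply: contraLR => nPj.
  have -> : K = j + (K - j) by lia.
  rewrite iotaD count_cat.
  have -> : count P (iota (0 + j) (K - j)) = 0.
    apply/eqP; rewrite -leqn0 leqNgt -has_count; apply/hasPn => i.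
    rewrite mem_iota => /andP [Hi _]; apply: contra nPj => Pi.
    by apply: (dc_le dc _ _ _ Pi); lia.
  rewrite addn0 -ltnNge ltnS; apply: leq_trans (count_size _ _) _.
  by rewrite size_iota.
Qed.

Definition kk (L : pred nat) (m c r : nat) :=
  count (fun j => ~~ L (r + j * m)) (iota 0 c).
Definition ww (L : pred nat) (m c r : nat) := r + kk L m c r * m.

Lemma kkP (L : pred nat) m c :
  (forall a b, L a -> L b -> L (a + b)) -> L m -> 0 < m ->
  (forall n, c <= n -> L n) ->
  forall r j, L (r + j * m) = (kk L m c r <= j).
Proof.
move=> Hadd Lm m0 Hc r j.
case: (ltnP j c) => Hj.
- have dc : forall i, (fun j => ~~ L (r + j * m)) i.+1 -> (fun j => ~~ L (r + j * m)) i.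
    move=> i /=; apply: contra => Li.
    by rewrite mulSnr addnA; apply: Hadd.
  have := @count_thresh (fun j => ~~ L (r + j * m)) c dc j Hj.
  rewrite -/(kk L m c r) /= => H.
  by move: H; case: (L _) => H; rewrite leqNgt -H.
- have -> : L (r + j * m) by apply: Hc; nia.
  symmetry; apply: leq_trans Hj.
  by apply: leq_trans (count_size _ _) _; rewrite size_iota.
Qed.

Section WW.
Context (L : pred nat) (m c : nat)
  (Hadd : forall a b, L a -> L b -> L (a + b)) (Lm : L m) (m0 : 0 < m)
  (Hc : forall n, c <= n -> L n).

Lemma ww_L r : L (ww L m c r).
Proof. by rewrite /ww (@kkP L m c Hadd Lm m0 Hc). Qed.

Lemma ww_gap r t : r < m -> 0 < t -> t * m <= ww L m c r ->
  ~~ L (ww L m c r - t * m).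
Proof.
rewrite /ww => rm t0 Ht.
have Htk : t <= kk L m c r by nia.
have -> : r + kk L m c r * m - t * m = r + (kk L m c r - t) * m.
  have : t * m <= kk L m c r * m by rewrite leq_mul2r Htk orbT.
  by rewrite mulnBl; lia.
rewrite (@kkP L m c Hadd Lm m0 Hc); lia.
Qed.

Lemma ww_lt r : r < m -> ww L m c r < c + m.
Proof.
rewrite /ww => rm.
case E: (kk L m c r) => [|k]; first by lia.
have : ~~ L (r + k * m) by rewrite (@kkP L m c Hadd Lm m0 Hc) E ltnn.
apply: contraR; rewrite -leqNgt => H; apply: Hc; rewrite mulSnr in H; lia.
Qed.

Lemma ww_mod r : r < m -> ww L m c r %% m = r.
Proof. by move=> rm; rewrite /ww addnC modnMDl modn_small. Qed.

Lemma ww_uniq y : L y -> (y < m) || ~~ L (y - m) -> ww L m c (y %% m) = y.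
Proof.
move=> Ly Hy.
have Ey := divn_eq y m.
have Hk : kk L m c (y %% m) <= y %/ m.
  by rewrite -(@kkP L m c Hadd Lm m0 Hc) addnC -Ey.
rewrite /ww.
case Eq: (y %/ m) Hk => [|q] Hk.
  by move: Hk; rewrite leqn0 => /eqP ->; rewrite mul0n addn0 {2}Ey Eq mul0n.
have Hym : m <= y by rewrite Ey Eq; nia.
have : ~~ L (y %% m + q * m).
  have -> : y %% m + q * m = y - m by rewrite {2}Ey Eq mulSnr; lia.
  by move: Hy; rewrite ltnNge Hym.
rewrite (@kkP L m c Hadd Lm m0 Hc) -ltnNge => Hq.
have -> : kk L m c (y %% m) = q.+1 by lia.
by rewrite addnC -Eq -Ey.
Qed.
End WW.

Definition cntT (L : pred nat) T x h :=
  count (fun t => (t * h <= x) && L (x - t * h)) (iota 1 T).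

Lemma sum_step (s : seq nat) (F1 F2 : nat -> nat) g :
  g \in s -> (forall h, F1 h <= F2 h) -> F1 g + g <= F2 g ->
  \sum_(h <- s) F1 h + g <= \sum_(h <- s) F2 h.
Proof.
elim: s => [//|a s IH]; rewrite inE big_cons big_cons => /orP [/eqP <-|gs] Hle Hg.
  by rewrite -addnA [_ + g]addnC addnA leq_add // leq_sum.
by rewrite -addnA leq_add // IH.
Qed.

Lemma span_bound (L : pred nat) (G : seq nat) T :
  (forall n, L n <-> in_span G n) ->
  forall x, in_span G x -> x <= T -> x <= \sum_(h <- G) h * cntT L T x h.
Proof.
move=> HG x; elim => [|g n Hg Hn IH] HT; first by [].
have Lg : L g by apply/HG; rewrite -[g]addn0; constructor => //; constructor.
have Ln : L n by apply/HG.
have IH' := IH ltac:(lia).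
have mono : forall h, cntT L T n h <= cntT L T (g + n) h.
  move=> h; apply: sub_count => t /= /andP [H1 H2]; apply/andP; split; first by lia.
  by rewrite -addnBA //; apply/HG; constructor => //; apply/HG.
case: (posnP g) => [g0|gpos].
  by rewrite g0 add0n.
apply: (leq_trans _ (@sum_step G (fun h => h * cntT L T n h) (fun h => h * cntT L T (g + n) h) g Hg _ _)).
- by rewrite addnC leq_add2r.
- by move=> h; rewrite leq_mul2l mono orbT.
- rewrite addnC -mulnS leq_mul2l; apply/orP; right.
  clear IH IH' mono; case: T HT => [|T'] HT; first by lia.
  set Pn := (fun t => (t * g <= n) && L (n - t * g)).
  set Pgn := (fun t => (t * g <= g + n) && L (g + n - t * g)).
  have E1 : cntT L T'.+1 (g + n) g = Pgn 1 + count Pgn (iota 2 T') by [].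
  have E2 : cntT L T'.+1 n g = count Pn (iota 1 T').
    rewrite /cntT -/Pn (_ : T'.+1 = T' + 1); last by rewrite addn1.
    rewrite iotaD count_cat /=.
    have -> : Pn (1 + T') = false.
      rewrite /Pn; apply/negbTE; rewrite negb_and -ltnNge; apply/orP; left; nia.
    by rewrite /= !addn0.
  rewrite E1 E2.
  have -> : Pgn 1 = true by rewrite /Pgn mul1n leq_addr addKn Ln.
  rewrite add1n ltnS.
  have -> : iota 2 T' = [seq 1 + i | i <- iota 1 T'] by rewrite -iotaDl.
  rewrite count_map; apply: sub_count => t /= /andP [H1 H2]; apply/andP; split.
    by rewrite mulnDl mul1n leq_add2l.
  by rewrite mulnDl mul1n subnDA addKn.
Qed.

Lemma count_mul_le h D T : h * count (fun t => t * h <= D) (iota 1 T) <= D.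
Proof.
elim: T => [|T IH]; first by rewrite muln0.
rewrite (_ : T.+1 = T + 1); last by rewrite addn1.
rewrite iotaD count_cat /=.
case H: ((1 + T) * h <= D); last by rewrite /= !addn0.
apply: leq_trans H; rewrite /= addn0 mulnC leq_mul2r; apply/orP; right.
by rewrite addn1 ltnS; apply: leq_trans (count_size _ _) _; rewrite size_iota.
Qed.

Lemma L_mul (L : pred nat) h t : L 0 -> (forall a b, L a -> L b -> L (a + b)) ->
  L h -> L (t * h).
Proof. by move=> L0 Hadd Lh; elim: t => [//|t IH]; rewrite mulSn; apply: Hadd. Qed.

Section Main.
Context (L : pred nat) (m c : nat) (L0 : L 0)
  (Hadd : forall a b, L a -> L b -> L (a + b)) (Lm : L m) (m0 : 0 < m)
  (Hc : forall n, c <= n -> L n).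

Local Notation w := (ww L m c).

Lemma inj_count h t : L h -> 0 < t ->
  count (fun r => (t * h <= w r) && L (w r - t * h)) (index_iota 0 m) <=
  count (fun r => t * h <= (c + m).-1 - w r) (index_iota 0 m).
Proof.
move=> Lh t0.
set P := fun r => _; set Q := fun r => _.
set f := fun r => (w r - t * h) %% m.
have Hf : forall r, r < m -> P r -> w (f r) = w r - t * h.
  move=> r rm /andP [H1 H2]; apply: (@ww_uniq L m c Hadd Lm m0 Hc) => //.
  case: (ltnP (w r - t * h) m) => //= Hge.
  apply: contra (@ww_gap L m c Hadd Lm m0 Hc _ _ rm (isT : 0 < 1) _) => [HL|]; last by rewrite mul1n; lia.
  have -> : w r - 1 * m = (w r - t * h - m) + t * h by rewrite mul1n; lia.
  by apply: Hadd => //; apply: L_mul.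
rewrite -!size_filter.
rewrite -(size_map f); apply: uniq_leq_size.
- rewrite map_inj_in_uniq; first by apply: filter_uniq; apply: iota_uniq.
  move=> r1 r2; rewrite !mem_filter !mem_index_iota => /andP [P1 /andP [_ r1m]] /andP [P2 /andP [_ r2m]] E.
  have E' : w r1 = w r2.
    have := Hf _ r1m P1; have := Hf _ r2m P2; rewrite /f in E *; rewrite E => -> .
    move: P1 P2 => /andP [A1 _] /andP [A2 _]; lia.
  by rewrite -(@ww_mod L m c r1 r1m) E' (@ww_mod L m c r2 r2m).
- move=> y /mapP [r]; rewrite mem_filter mem_index_iota => /andP [Pr /andP [_ rm]] ->.
  rewrite mem_filter mem_index_iota ltn_pmod // andbT /Q Hf //.
  have := @ww_lt L m c Hadd Lm m0 Hc _ rm; move: Pr => /andP [A _]; lia.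
Qed.

Lemma mterm r T : r < m -> cntT L T (w r) m = 0.
Proof.
move=> rm; apply/eqP; rewrite -leqn0 leqNgt -has_count; apply/hasPn => t.
rewrite mem_iota => /andP [t1 _]; rewrite negb_and.
case: (leqP (t * m) (w r)) => //= H.
exact: (@ww_gap L m c Hadd Lm m0 Hc _ _ rm t1 H).
Qed.

Lemma perh h T : L h ->
  h * \sum_(0 <= r < m) cntT L T (w r) h <= \sum_(0 <= r < m) ((c + m).-1 - w r).
Proof.
move=> Lh.
have E1 : \sum_(0 <= r < m) cntT L T (w r) h =
  \sum_(t <- iota 1 T) \sum_(0 <= r < m) ((t * h <= w r) && L (w r - t * h) : nat).
  rewrite exchange_big /=; apply: eq_bigr => r _; by rewrite /cntT count_sum.
have E2 : \sum_(t <- iota 1 T) \sum_(0 <= r < m) ((t * h <= w r) && L (w r - t * h) : nat)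
   <= \sum_(t <- iota 1 T) \sum_(0 <= r < m) (t * h <= (c + m).-1 - w r : nat).
  rewrite big_seq [X in _ <= X]big_seq; apply: leq_sum => t.
  rewrite mem_iota => /andP [t1 _].
  rewrite -!count_sum; exact: inj_count.
have E3 : \sum_(t <- iota 1 T) \sum_(0 <= r < m) (t * h <= (c + m).-1 - w r : nat) =
   \sum_(0 <= r < m) count (fun t => t * h <= (c + m).-1 - w r) (iota 1 T).
  rewrite exchange_big /=; apply: eq_bigr => r _; by rewrite count_sum.
rewrite E1; apply: leq_trans (leq_mul (leqnn h) E2) _; rewrite E3 big_distrr /=.
by apply: leq_sum => r _; apply: count_mul_le.
Qed.
End Main.

Lemma count_res (P : pred nat) K m :
  count P (iota 0 (K * m)) = \sum_(0 <= r < m) count (fun j => P (r + j * m)) (iota 0 K).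
Proof.
elim: K => [|K IH].
  by rewrite mul0n /= big1.
rewrite mulSnr iotaD count_cat IH.
have -> : iota (0 + K * m) m = [seq K * m + i | i <- iota 0 m] by rewrite -iotaDl addn0.
rewrite count_map count_sum /index_iota subn0 -big_split.
apply: eq_bigr => r _.
rewrite (_ : K.+1 = K + 1); last by rewrite addn1.
by rewrite iotaD count_cat /= add0n addn0 [r + _]addnC.
Qed.

Lemma sum_id2 n : (\sum_(0 <= r < n) r).*2 = n * n.-1.
Proof.
elim: n => [|n IH]; first by rewrite big_geq.
rewrite big_nat_recr //= doubleD IH; case: n {IH} => [|n] //=; lia.
Qed.

Lemma mem_span (L : pred nat) (G : seq nat) m :
  (forall n, L n <-> in_span G n) ->
  (forall y, 0 < y -> L y -> m <= y) -> 0 < m -> L m -> m \in G.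
Proof.
move=> HG Hmin m0 Lm.
have LG : forall g, g \in G -> L g.
  by move=> g Hg; apply/HG; rewrite -[g]addn0; constructor => //; constructor.
have : in_span G m by apply/HG.
have : forall x, in_span G x -> 0 < x -> x <= m -> m \in G.
  move=> x; elim => [//|g n Hg Hn IH] Hx Hxm.
  case: (posnP g) => [g0|gpos]; first by apply: IH; lia.
  have := Hmin g gpos (LG g Hg) => Hmg.
  have -> : m = g by lia.
  exact: Hg.
by move=> H Hs; apply: (H m Hs m0 (leqnn m)).
Qed.

Lemma nat_core (L : pred nat) (G : seq nat) (c m : nat) :
  numerical_semigroup L ->
  minimal_generating_set G L ->
  is_conductor L c ->
  is_multiplicity L m ->
  let e := size G in
  let S := \sum_(0 <= r < m) ww L m c r in
  [/\ 0 < e, S <= m * (c + m).-1, S <= (e - 1) * (m * (c + m).-1 - S),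
      S = \sum_(0 <= r < m) r + (c - cprime L c) * m & cprime L c <= c].
Proof.
move=> [L0 Hadd _] [_ HG _] [Hc _] [m0 Lm Hmin] e S.
have LG : forall g, g \in G -> L g.
  by move=> g Hg; apply/HG; rewrite -[g]addn0; constructor => //; constructor.
have mG := @mem_span L G m HG Hmin m0 Lm.
set W := (c + m).-1.
have wW : forall r, r < m -> ww L m c r <= W.
  move=> r rm; have := @ww_lt L m c Hadd Lm m0 Hc _ rm; rewrite /W; lia.
set X := \sum_(0 <= r < m) (W - ww L m c r).
have EX : X + S = m * W.
  rewrite /X /S -big_split /= -[m in m * W]subn0 -sum_nat_const_nat big_seq [in RHS]big_seq.
  apply: eq_bigr => r; rewrite mem_index_iota => /andP [_ rm]; rewrite subnK //; exact: wW.
have e0 : 0 < e by rewrite /e; case: (G) mG.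
have HA : S <= \sum_(h <- G) h * \sum_(0 <= r < m) cntT L (c + m) (ww L m c r) h.
  have -> : \sum_(h <- G) h * \sum_(0 <= r < m) cntT L (c + m) (ww L m c r) h =
     \sum_(0 <= r < m) \sum_(h <- G) h * cntT L (c + m) (ww L m c r) h.
    rewrite exchange_big /=; apply: eq_bigr => h _; by rewrite big_distrr.
  rewrite /S big_seq [X in _ <= X]big_seq; apply: leq_sum => r.
  rewrite mem_index_iota => /andP [_ rm].
  apply: span_bound => //; first by apply/HG; apply: ww_L.
  have := @ww_lt L m c Hadd Lm m0 Hc _ rm; lia.
have HB : \sum_(h <- G) h * \sum_(0 <= r < m) cntT L (c + m) (ww L m c r) h <=
          \sum_(h <- G) (h != m) * X.
  rewrite big_seq [X in _ <= X]big_seq; apply: leq_sum => h hG.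
  case: eqP => [->|_].
    rewrite big_seq big1 ?muln0 // => r; rewrite mem_index_iota => /andP [_ rm].
    exact: mterm.
  rewrite mul1n; apply: perh => //; exact: LG.
have HC : \sum_(h <- G) (h != m) * X = count (predC (pred1 m)) G * X.
  by rewrite -big_distrl count_sum.
have HD : count (predC (pred1 m)) G <= e - 1.
  have := count_predC (pred1 m) G; rewrite -/e.
  have : 0 < count (pred1 m) G by rewrite -has_count has_pred1.
  lia.
have HK : c - cprime L c = \sum_(0 <= r < m) kk L m c r.
  have := count_predC L (iota 0 c); rewrite size_iota /cprime => E.
  have -> : \sum_(0 <= r < m) kk L m c r = count (predC L) (iota 0 (c * m)).
    by rewrite count_res.
  have -> : c * m = c + (c * m - c) by nia.
  rewrite iotaD count_cat.
  have -> : count (predC L) (iota (0 + c) (c * m - c)) = 0.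
    apply/eqP; rewrite -leqn0 leqNgt -has_count; apply/hasPn => i.
    rewrite mem_iota => /andP [Hi _] /=; rewrite negbK; apply: Hc; lia.
  lia.
split => //.
- rewrite -EX; lia.
- have : S <= count (predC (pred1 m)) G * X by rewrite -HC; apply: leq_trans HA HB.
  have -> : m * (c + m).-1 - S = X by rewrite -/W -EX addnK.
  move=> H; apply: leq_trans H _; rewrite leq_mul2r HD orbT //.
- rewrite /S /ww big_split /= -big_distrl /= HK //.
- by rewrite /cprime; apply: leq_trans (count_size _ _) _; rewrite size_iota.
Qed.
Local Open Scope ring_scope.

Theorem theorem1 (L : pred nat) (G : seq nat) (c m : nat) :
  numerical_semigroup L ->
  minimal_generating_set G L ->
  is_conductor L c ->
  is_multiplicity L m ->
  let e := size G in
  (c%:R / e%:R - ((m%:R - 1) * (e%:R - 2)) / (2 * e%:R) : rat)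
    <= (cprime L c)%:R.
Proof.
move=> HL HG Hc Hm /=; set e := size G.
have [e0 H1 H2 H3 H4] := @nat_core L G c m HL HG Hc Hm.
have m0 : (0 < m)%N by case: Hm.
rewrite -/e in e0 H2.
set S := \sum_(0 <= r < m) ww L m c r in H1 H2 H3.
set cp := cprime L c in H3 H4 *.
have T2 := sum_id2 m.
set s := \sum_(0 <= r < m) r in H3 T2.
set g := (c - cp)%N in H3.
have Ec : c = (cp + g)%N by rewrite /g; lia.
have key : (e * S <= (e - 1) * (m * (c + m).-1))%N.
  set Y := (m * (c + m).-1 - S)%N in H2.
  have EY : (Y + S = m * (c + m).-1)%N by rewrite /Y; lia.
  rewrite -EY; nia.
clear H1 H2 HL HG Hc Hm; clearbody e S s g cp.
subst S c.
case: e e0 key => [//|e'] _ key; case: m m0 T2 key => [//|m'] _ T2 key.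
rewrite subSS subn0 /= in key T2.
have key2 : ((e'.+1 * (m'.+1 * m' + (g * m'.+1).*2)) <= e' * (m'.+1 * (cp + g + m')).*2)%N.
  move: key; rewrite -T2 -doubleD -!doubleMr leq_double.
  by rewrite (_ : (cp + g + m'.+1).-1 = cp + g + m')%N; last by lia.
have := key2; rewrite -(ler_nat rat) -!muln2 !(natrM, natrD) => kq.
rewrite -!(addn1 e') -!(addn1 m') !natrD in kq *.
have E0 : 0 <= (e'%:R : rat) by rewrite ler0n.
have M0 : 0 <= (m'%:R : rat) by rewrite ler0n.
have C0 : 0 <= (cp%:R : rat) by rewrite ler0n.
have G0 : 0 <= (g%:R : rat) by rewrite ler0n.
have Ep : (e'%:R + 1 : rat) != 0 by rewrite lt0r_neq0 //; lra.
rewrite (_ : (cp%:R + g%:R) / (e'%:R + 1) - (m'%:R + 1 - 1) * (e'%:R + 1 - 2) / (2 * (e'%:R + 1)) =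
          ((cp%:R + g%:R) - m'%:R * (e'%:R - 1) / 2) / (e'%:R + 1) :> rat); last first.
  by field; rewrite Ep.
rewrite ler_pdivrMr; last by lra.
nra.
Qed.
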